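(* Let $n\ge 2$ and let $e_1,\dots,e_n$ be the standard basis vectors of $\mathbb{C}^n$; write $\iota=\sqrt{-1}$. For each $s$, $rank_{cps}(e_s\otimes e_s\otimes e_s\otimes e_s)=1$. For $s\neq t$, the tensor $\mathcal{E}^{sstt}:=e_s\otimes e_s\otimes e_t\otimes e_t+e_t\otimes e_t\otimes e_s\otimes e_s$ satisfies $rank_{cps}(\mathcal{E}^{sstt})=4$, and \[ \mathcal{E}^{sstt}=\tfrac14\Big[(e_s+e_t)^{\otimes 4}+(e_s-e_t)^{\otimes 4}-(e_s+\iota e_t)^{\otimes 2}\otimes(e_s-\iota e_t)^{\otimes 2}-(e_s-\iota e_t)^{\otimes 2}\otimes(e_s+\iota e_t)^{\otimes 2}\Big] \] is a CPS rank decomposition of it.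
   Context: A tensor $\mathcal{A}\in\mathbb{C}^{n\times n\times n\times n}$ is conjugate partial-symmetric (CPS) if $\mathcal{A}_{ijkl}=\overline{\mathcal{A}_{klij}}$ and $\mathcal{A}_{ijkl}=\mathcal{A}_{jikl}=\mathcal{A}_{ijlk}$ for all indices. Every CPS tensor can be written as $\mathcal{A}=\sum_{i=1}^r\lambda_i a_i\otimes a_i\otimes\bar a_i\otimes\bar a_i$ with $\lambda_i\in\mathbb{R}$, $a_i\in\mathbb{C}^n$ (a CPS decomposition); the smallest such $r$ is the CPS rank $rank_{cps}(\mathcal{A})$, and a CPS decomposition with $r=rank_{cps}(\mathcal{A})$ terms is a CPS rank decomposition. Here $(u\otimes v\otimes w\otimes z)_{ijkl}=u_iv_jw_kz_l$ and $x^{\otimes d}$ is the $d$-fold tensor product of $x$ with itself. *)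

(* Defs.v *)
From mathcomp Require Import all_boot all_algebra.
From mathcomp Require Import complex Rstruct.
Set Implicit Arguments. Unset Strict Implicit. Unset Printing Implicit Defensive.
Import GRing.Theory Num.Theory.
Local Open Scope ring_scope.

Notation C := (Rdefinitions.R)[i].

Definition vec (n : nat) := 'I_n -> C.
Definition tensor4 (n : nat) := 'I_n -> 'I_n -> 'I_n -> 'I_n -> C.

Definition outer4 n (u v w z : vec n) : tensor4 n :=
  fun i j k l => u i * v j * w k * z l.

Definition tadd n (A B : tensor4 n) : tensor4 n := fun i j k l => A i j k l + B i j k l.
Definition tscale n (c : C) (A : tensor4 n) : tensor4 n := fun i j k l => c * A i j k l.

Definition tpow4 n (x : vec n) : tensor4 n := outer4 x x x x.

Definition vconj n (a : vec n) : vec n := fun i => (a i)^*.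
Definition vadd n (u v : vec n) : vec n := fun i => u i + v i.
Definition vscale n (c : C) (u : vec n) : vec n := fun i => c * u i.

Definition ebasis n (s : 'I_n) : vec n := fun i => (i == s)%:R.

Definition is_CPS n (A : tensor4 n) : Prop :=
  forall i j k l,
    A i j k l = (A k l i j)^* /\ A i j k l = A j i k l /\ A i j k l = A i j l k.

Definition cps_decomp n (A : tensor4 n) (r : nat) (lam : 'I_r -> C) (a : 'I_r -> vec n)
  : Prop :=
  (forall m, lam m \is Num.real) /\
  (forall i j k l,
     A i j k l = \sum_(m < r) lam m * outer4 (a m) (a m) (vconj (a m)) (vconj (a m)) i j k l).

Definition has_cps_decomp n (A : tensor4 n) (r : nat) : Prop :=
  exists lam a, @cps_decomp n A r lam a.

Definition cps_rank n (A : tensor4 n) (r : nat) : Prop :=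
  is_CPS A /\ @has_cps_decomp n A r /\ (forall r', @has_cps_decomp n A r' -> (r <= r')%N).

Definition cps_rank_decomp n (A : tensor4 n) (r : nat) (lam : 'I_r -> C) (a : 'I_r -> vec n)
  : Prop := cps_rank A r /\ @cps_decomp n A r lam a.

Definition Esstt n (s t : 'I_n) : tensor4 n :=
  tadd (outer4 (ebasis s) (ebasis s) (ebasis t) (ebasis t))
       (outer4 (ebasis t) (ebasis t) (ebasis s) (ebasis s)).

(* Main.v *)
Require Import Defs.
From mathcomp Require Import all_boot all_algebra.
From mathcomp Require Import complex Rstruct ring.
From Stdlib Require Import FunctionalExtensionality.
Import GRing.Theory Num.Theory.
From mathcomp Require Import order.
Import Order.TTheory.
Local Open Scope ring_scope.
Set Implicit Arguments. Unset Strict Implicit.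

Lemma cD (a b : C) : (a+b)^* = a^* + b^*. Proof. exact: rmorphD. Qed.
Lemma cM (a b : C) : (a*b)^* = a^* * b^*. Proof. exact: rmorphM. Qed.
Lemma cN (a : C) : (-a)^* = - a^*. Proof. exact: rmorphN. Qed.
Lemma c0 : (0:C)^* = 0. Proof. exact: rmorph0. Qed.
Lemma c1 : (1:C)^* = 1. Proof. exact: rmorph1. Qed.
Lemma cK (a : C) : a^*^* = a. Proof. exact: conjCK. Qed.

Lemma key (x y c sg : C) : 0 <= c -> sg^* = sg -> sg * sg = 1 ->
  exists y1 y2 y3 : C,
    let L := (x*x)^* * y1 + (x*y)^* * y2 + (y*y)^* * y3 in
    sg * (y1^* * y3 + y3^* * y1) + c * (L^* * L) < 0.
Proof.
move=> c0 hs hss.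
have cr : c^* = c by apply: conj_Creal; apply: ger0_real.
have [q0|qn0] := eqVneq (x*y) 0.
- move/eqP: q0; rewrite mulf_eq0 => /orP[/eqP x0|/eqP y0].
  + set K := c * (y*y) * (y*y)^*.
    have K0 : 0 <= K by rewrite /K -mulrA mulr_ge0 // mul_conjC_ge0.
    have Kr : (K+1)^* = K+1 by apply: conj_Creal; apply: ger0_real; rewrite addr_ge0.
    exists (K+1), 0, (-sg) => /=.
    have -> : sg * ((K + 1)^* * - sg + (- sg)^* * (K + 1)) +
       c * (((x * x)^* * (K + 1) + (x * y)^* * 0 + (y * y)^* * - sg)^* *
         ((x * x)^* * (K + 1) + (x * y)^* * 0 + (y * y)^* * - sg)) = - (K + 2).
      rewrite Kr x0 !(cD, cM, cN, cK, hs, c0, cr) /K.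
      ring: hss.
    by rewrite oppr_lt0 ltr_wpDl.
  + set K := c * (x*x) * (x*x)^*.
    have K0 : 0 <= K by rewrite /K -mulrA mulr_ge0 // mul_conjC_ge0.
    have Kr : (K+1)^* = K+1 by apply: conj_Creal; apply: ger0_real; rewrite addr_ge0.
    exists (-sg), 0, (K+1) => /=.
    have -> : sg * ((- sg)^* * (K + 1) + (K + 1)^* * - sg) +
       c * (((x * x)^* * - sg + (x * y)^* * 0 + (y * y)^* * (K+1))^* *
         ((x * x)^* * - sg + (x * y)^* * 0 + (y * y)^* * (K+1))) = - (K + 2).
      rewrite Kr y0 !(cD, cM, cN, cK, hs, c0, cr) /K.
      ring: hss.
    by rewrite oppr_lt0 ltr_wpDl.
- have qc : (x*y)^* != 0 by rewrite conjC_eq0.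
  exists 1, (- ((x*x)^* - sg * (y*y)^*) / (x*y)^*), (-sg) => /=.
  have -> : (x * x)^* * 1 + (x * y)^* * (- ((x * x)^* - sg * (y * y)^*) / (x * y)^*) +
     (y * y)^* * - sg = 0.
    have := qc; rewrite cM mulf_eq0 negb_or => /andP[h1 h2].
    by field; apply/andP; split.
  rewrite mulr0 mulr0 addr0 cN hs c1.
  have -> : sg * (1 * - sg + - sg * 1) = - 2 by ring: hss.
  by rewrite oppr_lt0.
Qed.

Definition Sform n (A : tensor4 n) (s t : 'I_n) (y1 y2 y3 : C) : C :=
   y1^* * A s s s s * y1 + y1^* * A s s s t * y2 + y1^* * A s s t t * y3
 + (y2^* * A s t s s * y1 + y2^* * A s t s t * y2 + y2^* * A s t t t * y3)
 + (y3^* * A t t s s * y1 + y3^* * A t t s t * y2 + y3^* * A t t t t * y3).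

Lemma Sform_E n (s t : 'I_n) (y1 y2 y3 : C) : s != t ->
  Sform (Esstt s t) s t y1 y2 y3 = y1^* * y3 + y3^* * y1.
Proof.
move=> hst; have hts : t != s by rewrite eq_sym.
rewrite /Sform /Esstt /tadd /outer4 /ebasis !eqxx (negbTE hst) (negbTE hts) /=.
ring.
Qed.

Lemma Sform_dec n (A : tensor4 n) r (lam : 'I_r -> C) (a : 'I_r -> vec n) s t (y1 y2 y3 : C) :
  (forall i j k l, A i j k l =
     \sum_(m < r) lam m * outer4 (a m) (a m) (vconj (a m)) (vconj (a m)) i j k l) ->
  Sform A s t y1 y2 y3 = \sum_(m < r) lam m *
    (((a m s * a m s)^* * y1 + (a m s * a m t)^* * y2 + (a m t * a m t)^* * y3)^* *
     ((a m s * a m s)^* * y1 + (a m s * a m t)^* * y2 + (a m t * a m t)^* * y3)).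
Proof.
move=> hA; rewrite /Sform !hA !mulr_sumr !mulr_suml -!big_split /=.
apply: eq_bigr => m _; rewrite /outer4 /vconj !(cD, cM, cK).
ring.
Qed.

Lemma claim n (s t : 'I_n) r (lam : 'I_r -> C) (a : 'I_r -> vec n) (sg : C) (m0 : 'I_r) :
  s != t -> sg^* = sg -> sg * sg = 1 -> (forall m, lam m \is Num.real) ->
  (forall i j k l, Esstt s t i j k l =
     \sum_(m < r) lam m * outer4 (a m) (a m) (vconj (a m)) (vconj (a m)) i j k l) ->
  exists m, m != m0 /\ sg * lam m < 0.
Proof.
move=> hst hs hss lr hA.
case: (pickP (fun m => (m != m0) && (sg * lam m < 0))) => [m /andP[h1 h2]|H].
  by exists m.
exfalso.
have sr : sg \is Num.real by apply/CrealP.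
have [y1 [y2 [y3 /= Hk]]] := key (a m0 s) (a m0 t) (normr_ge0 (lam m0)) hs hss.
set L0 := (X in X^* * X) in Hk.
have E := Sform_dec s t y1 y2 y3 hA.
rewrite Sform_E // in E.
rewrite E mulr_sumr (bigD1 m0) //= -/L0 in Hk.
set R := (X in _ + X + _) in Hk.
have R0 : 0 <= R.
  rewrite /R; apply: sumr_ge0 => m hm.
  have := H m; rewrite hm /= => hn.
  rewrite mulrA mulr_ge0 //; last by rewrite mulrC mul_conjC_ge0.
  by rewrite (real_leNgt (rpred0 _) (rpredM sr (lr m))) hn.
have hL : 0 <= L0^* * L0 by rewrite mulrC mul_conjC_ge0.
have hl : - `|lam m0| <= sg * lam m0.
  apply: real_lerNnormlW; first by rewrite rpredM.
  suff h1 : `|sg| = 1 by rewrite normrM h1 mul1r.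
  by apply/eqP; rewrite -(@pexpr_eq1 _ _ 2) // ?normr_ge0 // -normrX expr2 hss normr1.
move: Hk.
have -> : sg * (lam m0 * (L0^* * L0)) + R + `|lam m0| * (L0^* * L0) =
  (sg * lam m0 + `|lam m0|) * (L0^* * L0) + R by ring.
move/lt_geF => /negbT /negP HH; apply: HH.
apply: addr_ge0 => //; apply: mulr_ge0 => //.
by rewrite -(addNr `|lam m0|) lerD2r.
Qed.

Lemma cn (k : nat) : (k%:R : C)^* = k%:R. Proof. exact: conjC_nat. Qed.

Lemma cps_E n (s t : 'I_n) : is_CPS (Esstt s t).
Proof.
move=> i j k l; rewrite /Esstt /tadd /outer4 /ebasis !(cD, cM, cn).
split; [ring| split; ring].
Qed.

Lemma cps_e4 n (s : 'I_n) : is_CPS (outer4 (ebasis s) (ebasis s) (ebasis s) (ebasis s)).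
Proof.
move=> i j k l; rewrite /outer4 /ebasis !(cD, cM, cn).
split; [ring| split; ring].
Qed.

Lemma lower_E n (s t : 'I_n) r : s != t -> has_cps_decomp (Esstt s t) r -> (4 <= r)%N.
Proof.
move=> hst [lam [a [lr hA]]].
have hts : t != s by rewrite eq_sym.
have r0 : (0 < r)%N.
  case: r lam a lr hA => // lam a _ hA.
  have := hA s s t t; rewrite big_ord0 /Esstt /tadd /outer4 /ebasis eqxx (negbTE hts) /=.
  by rewrite !eqxx (negbTE hst) /= !(mul1r, mul0r, mulr0, addr0) => /eqP; rewrite oner_eq0.
pose m0 := Ordinal r0.
have hs1 : (-1 : C)^* = -1 by rewrite cN c1.
have hss1 : (-1 : C) * -1 = 1 by rewrite mulN1r opprK.
have hs2 : (1 : C)^* = 1 by rewrite c1.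
have hss2 : (1 : C) * 1 = 1 by rewrite mulr1.
have [p1 [_ hp1]] := claim m0 hst hs1 hss1 lr hA.
have [p2 [hp12 hp2]] := claim p1 hst hs1 hss1 lr hA.
have [q1 [_ hq1]] := claim m0 hst hs2 hss2 lr hA.
have [q2 [hq12 hq2]] := claim q1 hst hs2 hss2 lr hA.
pose P := [set m | (-1) * lam m < 0].
pose Q := [set m | 1 * lam m < 0].
have cP : (2 <= #|P|)%N.
  have <- : #|[set p2; p1]| = 2%N by rewrite cards2 hp12.
  apply: subset_leq_card; apply/subsetP => m; rewrite !inE => /orP[/eqP->|/eqP->] //.
have cQ : (2 <= #|Q|)%N.
  have <- : #|[set q2; q1]| = 2%N by rewrite cards2 hq12.
  apply: subset_leq_card; apply/subsetP => m; rewrite !inE => /orP[/eqP->|/eqP->] //.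
have hPQ : P :&: Q = set0.
  apply/setP => m; rewrite !inE mulN1r oppr_lt0 mul1r.
  apply/negbTE/andP => -[h1 h2].
  by have := lt_trans h2 h1; rewrite ltxx.
have := cardsUI P Q; rewrite hPQ cards0 addn0 => hU.
have hle : (#|P :|: Q| <= r)%N by apply: leq_trans (max_card _) _; rewrite card_ord.
apply: leq_trans hle; rewrite hU.
exact: (leq_add cP cQ).
Qed.

Theorem proposition3p1 (n : nat) (hn : (2 <= n)%N) :
  (forall s : 'I_n,
     cps_rank (outer4 (ebasis s) (ebasis s) (ebasis s) (ebasis s)) 1) /\
  (forall s t : 'I_n, s != t ->
     let es := ebasis s in
     let et := ebasis t in
     let ap := vadd es et in                      (* e_s + e_t *)
     let am := vadd es (vscale (-1) et) in        (* e_s - e_t *)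
     let bp := vadd es (vscale 'i et) in          (* e_s + i e_t *)
     let bm := vadd es (vscale (- 'i) et) in      (* e_s - i e_t *)
     cps_rank (Esstt s t) 4 /\
     (* the displayed identity *)
     Esstt s t =
       tscale (1 / 4)
         (tadd (tadd (tpow4 ap) (tpow4 am))
               (tadd (tscale (-1) (outer4 bp bp bm bm))
                     (tscale (-1) (outer4 bm bm bp bp)))) /\
     (* and it is a CPS rank decomposition:
        lambda = (1/4, 1/4, -1/4, -1/4), a = (ap, am, bp, bm) *)
     @cps_rank_decomp _ (Esstt s t) 4
       (fun m : 'I_4 => match val m with 0%N | 1%N => 1 / 4 | _ => - (1 / 4) end)
       (fun m : 'I_4 => match val m with 0%N => ap | 1%N => am | 2%N => bp | _ => bm end)).
Proof.
have h4 : (4 : C)^-1 * 4 = 1 by rewrite mulVf // pnatr_eq0.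
split.
  move=> s; split; first exact: cps_e4.
  split.
    exists (fun _ => 1), (fun _ => ebasis s); split=> [m|i j k l]; first exact: rpred1.
    rewrite big_ord1 /outer4 /vconj /ebasis !(cD, cM, cn); ring.
  move=> [|r'] // [lam [a [_ hA]]].
  have := hA s s s s; rewrite big_ord0 /outer4 /ebasis !eqxx /=.
  by rewrite !mul1r => /eqP; rewrite oner_eq0.
move=> s t hst; cbv zeta.
set lam4 := (fun m : 'I_4 => _).
set a4 := (fun m : 'I_4 => match val m with 0%N => _ | 1%N => _ | 2%N => _ | _ => _ end).
have hdec : cps_decomp (Esstt s t) lam4 a4.
  split.
    move=> [[|[|[|k]]] Hk]; rewrite /lam4 /= ?rpredN rpred_div ?rpred1 ?rpred_nat //.
  move=> i j k l; rewrite !big_ord_recr big_ord0 /= /lam4 /a4 /=.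
  rewrite /Esstt /tadd /outer4 /vconj /vadd /vscale /ebasis !(cD, cM, cN, cn, conjCi, c1).
  ring: (@mulCii C) h4.
have hid : Esstt s t =
       tscale (1 / 4)
         (tadd (tadd (tpow4 (vadd (ebasis s) (ebasis t))) (tpow4 (vadd (ebasis s) (vscale (-1) (ebasis t)))))
               (tadd (tscale (-1) (outer4 (vadd (ebasis s) (vscale 'i (ebasis t))) (vadd (ebasis s) (vscale 'i (ebasis t))) (vadd (ebasis s) (vscale (- 'i) (ebasis t))) (vadd (ebasis s) (vscale (- 'i) (ebasis t)))))
                     (tscale (-1) (outer4 (vadd (ebasis s) (vscale (- 'i) (ebasis t))) (vadd (ebasis s) (vscale (- 'i) (ebasis t))) (vadd (ebasis s) (vscale 'i (ebasis t))) (vadd (ebasis s) (vscale 'i (ebasis t))))))).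
  apply: functional_extensionality_dep => i.
  apply: functional_extensionality_dep => j.
  apply: functional_extensionality_dep => k.
  apply: functional_extensionality_dep => l.
  rewrite /Esstt /tscale /tadd /tpow4 /outer4 /vadd /vscale /ebasis.
  ring: (@mulCii C) h4.
have hrank : cps_rank (Esstt s t) 4.
  split; first exact: cps_E.
  split; first by exists lam4, a4.
  by move=> r'; apply: lower_E.
by split=> //; split.
Qed.
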